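(* Let $L\ge 6$ be even, let $\eta\in V_{\mathrm{o}}$ and let $\ell_1,\ell_2$ be integers with $0\le \ell_1,\ell_2\le L$. Then: (i) If $\max\{\ell_1,\ell_2\}\le L-2$ and $\min\{\ell_1,\ell_2\}\ge L/2$, then the complement $V\setminus\mathcal{R}_{\ell_1,\ell_2}(\eta)$ is a rhombus $\mathcal{R}_{L-\ell_1-1,L-\ell_2-1}(\hat\eta)$ for some $\hat\eta\in V_{\mathrm{e}}$. (ii) If $\max\{\ell_1,\ell_2\}=L-1$ and $\min\{\ell_1,\ell_2\}\ge L/2$, then $V\setminus\mathcal{R}_{\ell_1,\ell_2}(\eta)$ is the disjoint union of $L-\min\{\ell_1,\ell_2\}$ odd sites. (iii) If $\max\{\ell_1,\ell_2\}=L$ and $\min\{\ell_1,\ell_2\}<L/2$, then $\mathcal{R}_{\ell_1,\ell_2}(\eta)$ contains exactly $L\min\{\ell_1,\ell_2\}$ odd sites and $L(\min\{\ell_1,\ell_2\}+1)$ even sites. (iv) If $\max\{\ell_1,\ell_2\}=L$ and $\min\{\ell_1,\ell_2\}\ge L/2$, then $\mathcal{R}_{\ell_1,\ell_2}(\eta)=V$.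
   Context: $L\ge 6$ is an even integer and $\Lambda=(V,E)$ is the $L\times L$ toric grid graph: $V=\{0,\dots,L-1\}^2$, two sites are adjacent iff they differ by $\pm1$ modulo $L$ in exactly one coordinate; all coordinate arithmetic is modulo $L$. A site is even (odd) if the sum of its coordinates is even (odd); $V_{\mathrm{e}}$, $V_{\mathrm{o}}$ denote the sets of even and odd sites. For $S\subseteq V$, $\partial^+S$ is the set of sites not in $S$ adjacent to some site of $S$. For a reference site $\eta=(\eta_1,\eta_2)$ and positive integers $\ell_1,\ell_2\le L$, set $S_{\ell_1,\ell_2}(\eta)=\{(\eta_1+k+j,\ \eta_2+k-j): 0\le k\le \ell_1-1,\ 0\le j\le \ell_2-1\}$ and define the rhombus $\mathcal{R}_{\ell_1,\ell_2}(\eta)=S_{\ell_1,\ell_2}(\eta)\cup\partial^+S_{\ell_1,\ell_2}(\eta)$. When $\eta\in V_{\mathrm{o}}$, $S_{\ell_1,\ell_2}(\eta)$ consists of odd sites and its boundary of even sites; when $\eta\in V_{\mathrm{e}}$ (as in (i)) the same formula defines a rhombus whose set $S$ consists of even sites and whose boundary consists of odd sites. *)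

(* Defs.v *)
From mathcomp Require Import all_boot.
Set Implicit Arguments. Unset Strict Implicit. Unset Printing Implicit Defensive.

Definition site (L : nat) := ('I_L * 'I_L)%type.

Definition even_site L (x : site L) : bool := ~~ odd (x.1 + x.2).
Definition odd_site L (x : site L) : bool := odd (x.1 + x.2).

Definition nbr1 (L : nat) (a b : nat) : bool :=
  (b == (a + 1) %% L) || (a == (b + 1) %% L).

Definition adj L (x y : site L) : bool :=
  ((x.1 == y.1) && nbr1 L x.2 y.2) || ((x.2 == y.2) && nbr1 L x.1 y.1).

(* S_{l1,l2}(eta) = {(eta1+k+j, eta2+k-j) mod L : 0<=k<l1, 0<=j<l2} *)
Definition Sset L (l1 l2 : nat) (eta : site L) : {set site L} :=
  [set x : site L | [exists k : 'I_l1, exists j : 'I_l2,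
     (x.1 == (eta.1 + k + j) %% L :> nat) &&
     (x.2 == (eta.2 + k + (L - j %% L)) %% L :> nat)]].

Definition outer_bd L (S : {set site L}) : {set site L} :=
  [set x : site L | (x \notin S) && [exists y in S, adj x y]].

Definition rhombus L (l1 l2 : nat) (eta : site L) : {set site L} :=
  Sset l1 l2 eta :|: outer_bd (Sset l1 l2 eta).

(* Main.v *)
Require Import Defs.
From mathcomp Require Import all_boot.
From mathcomp Require Import all_algebra zify ring.
Import GRing.Theory.

Section Torus.
Variable n : nat.
Hypothesis hev : ~~ odd n.
Local Notation L := n.+2.
Local Notation Z := 'I_(n.+2).
Local Notation h := (n.+2)./2.

Lemma L2h : h + h = L.
Proof. have := odd_double_half L; rewrite /= (negbTE hev) /= add0n -addnn; by []. Qed.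

Definition hZ : Z := (h%:R)%R.

Lemma valn (c : nat) : c < L -> nat_of_ord (c%:R : Z)%R = c.
Proof. move=> hc; rewrite Zp_nat /= modn_small //. Qed.

Lemma valh : nat_of_ord hZ = h.
Proof. apply: valn; have := L2h; lia. Qed.

Lemma vadd (x y : Z) : nat_of_ord (x + y)%R = if nat_of_ord x + nat_of_ord y < L then nat_of_ord x + nat_of_ord y else nat_of_ord x + nat_of_ord y - L.
Proof.
rewrite /= /inZp /=; case: ltnP => H; first by rewrite modn_small.
have hx := ltn_ord x; have hy := ltn_ord y.
rewrite -[X in X %% _](_ : nat_of_ord x + nat_of_ord y - L + L = nat_of_ord x + nat_of_ord y); last first.
by lia.
rewrite modnDr modn_small //; lia.
Qed.

Lemma vopp (x : Z) : nat_of_ord (- x)%R = if nat_of_ord x == 0 then 0 else L - x.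
Proof.
rewrite /= /inZp /=; have hx := ltn_ord x.
case: eqP => [->|H]; first by rewrite subn0 modnn.
rewrite modn_small //; lia.
Qed.

Lemma val1 : nat_of_ord (1 : Z)%R = 1.
Proof. by []. Qed.

Lemma oddL : odd L = false.
Proof. by rewrite /= (negbTE hev). Qed.

Lemma odd_add (x y : Z) : odd (x + y)%R = odd x (+) odd y.
Proof.
rewrite vadd; case: ltnP => H; first by rewrite oddD.
by rewrite oddB // oddD oddL addbF.
Qed.

Lemma odd_opp (x : Z) : odd (- x)%R = odd x.
Proof.
rewrite vopp; case: eqP => [->|H] //.
by rewrite oddB ?oddL // ltnW.
Qed.

Lemma odd_sub (x y : Z) : odd (x - y)%R = odd x (+) odd y.
Proof. by rewrite odd_add odd_opp. Qed.

Definition phi (e : site L) (k j : Z) : site L := (e.1 + k + j, e.2 + k - j)%R.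
Definition psi (e : site L) (k j : Z) : site L := phi (e.1 - 1, e.2)%R k j.

Lemma phi1 e k j : (phi e k j).1 = (e.1 + k + j)%R. Proof. by []. Qed.
Lemma phi2 e k j : (phi e k j).2 = (e.2 + k - j)%R. Proof. by []. Qed.

Lemma odd_siteE (x : site L) : odd_site x = odd x.1 (+) odd x.2.
Proof. by rewrite /odd_site oddD. Qed.

Lemma par_phi e k j : odd_site (phi e k j) = odd_site e.
Proof.
rewrite !odd_siteE phi1 phi2 !odd_add !odd_opp.
by case: (odd e.1); case: (odd e.2); case: (odd k); case: (odd j).
Qed.

Lemma par_psi e k j : odd_site (psi e k j) = ~~ odd_site e.
Proof.
rewrite /psi par_phi !odd_siteE.
have -> : ((e.1 - 1)%R, e.2).1 = (e.1 - 1)%R by [].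
have -> : ((e.1 - 1)%R, e.2).2 = e.2 by [].
rewrite odd_add odd_opp val1.
by case: (odd e.1); case: (odd e.2).
Qed.


Lemma psi1 e k j : (psi e k j).1 = (e.1 - 1 + k + j)%R. Proof. by []. Qed.
Lemma psi2 e k j : (psi e k j).2 = (e.2 + k - j)%R. Proof. by []. Qed.
Lemma pairE (x y : site L) : x.1 = y.1 -> x.2 = y.2 -> x = y.
Proof. by case: x => ? ?; case: y => ? ? /= -> ->. Qed.

Lemma memS e l1 l2 x : l1 <= L -> l2 <= L ->
  reflect (exists k j : Z, [/\ x = phi e k j, (k : nat) < l1 & (j : nat) < l2])
          (x \in Sset l1 l2 e).
Proof.
move=> Hl1 Hl2; rewrite /Sset inE; apply: (iffP existsP).
- case=> k /existsP [j /andP [/eqP h1e /eqP h2e]].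
  have hk : k < L := leq_trans (ltn_ord k) Hl1.
  have hj : j < L := leq_trans (ltn_ord j) Hl2.
  exists (Ordinal hk), (Ordinal hj); split; [|exact: ltn_ord k|exact: ltn_ord j].
  case: x h1e h2e => x1 x2 /= h1e h2e.
  congr pair; apply: val_inj => /=.
    by rewrite h1e modnDml.
  by rewrite h2e modnDml modnDmr (modn_small hj).
- case=> k [j [-> hk hj]]; exists (Ordinal hk); apply/existsP; exists (Ordinal hj).
  rewrite /=; apply/andP; split; apply/eqP.
    by rewrite modnDml.
  by rewrite modnDml modnDmr (modn_small (ltn_ord j)).
Qed.

Lemma nbr1E (a b : Z) : nbr1 L a b = (b == a + 1)%R || (a == b + 1)%R.
Proof.
rewrite /nbr1 -!val_eqE /=; by [].
Qed.

Lemma adjE (x y : site L) : adj x y =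
  ((x.1 == y.1) && ((y.2 == x.2 + 1)%R || (x.2 == y.2 + 1)%R)) ||
  ((x.2 == y.2) && ((y.1 == x.1 + 1)%R || (x.1 == y.1 + 1)%R)).
Proof. by rewrite /adj !nbr1E. Qed.


Lemma hh : (hZ + hZ = 0 :> Z)%R.
Proof.
apply: ord_inj; rewrite vadd valh L2h ltnn subnn; by [].
Qed.

Lemma hopp : (- hZ = hZ :> Z)%R.
Proof. by apply/eqP; rewrite eq_sym -addr_eq0 hh. Qed.

Lemma two_zero (d : Z) : (d + d = 0)%R -> d = 0%R \/ d = hZ.
Proof.
move=> /(congr1 (@nat_of_ord _)); rewrite vadd /=.
have hd := ltn_ord d; have := L2h.
case: ltnP => H1 H2 H3.
  by left; apply: ord_inj => /=; lia.
by right; apply: ord_inj; rewrite valh; lia.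
Qed.

Lemma phi_tau e (k j : Z) : phi e (k + hZ)%R (j + hZ)%R = phi e k j.
Proof.
apply: pairE; rewrite ?phi1 ?phi2.
  by rewrite -[RHS]addr0 -hh; ring.
by ring.
Qed.

Lemma phi_inj e (k j k' j' : Z) : phi e k j = phi e k' j' ->
  (k' = k /\ j' = j) \/ (k' = k + hZ /\ j' = j + hZ)%R.
Proof.
move=> E.
have E1 := congr1 fst E; have E2 := congr1 snd E.
rewrite !phi1 in E1; rewrite !phi2 in E2.
have D : ((k' - k) + (k' - k) = 0)%R.
  have -> : ((k' - k) + (k' - k) = (e.1 + k' + j' + (e.2 + k' - j')) - (e.1 + k + j + (e.2 + k - j)))%R by ring.
  by rewrite -E1 -E2; ring.
have Ej : (j' = j - (k' - k))%R.
  have -> : j' = (e.1 + k' + j' - e.1 - k')%R by ring.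
  by rewrite -E1; ring.
have Ek : (k' = (k' - k) + k)%R by ring.
case: (two_zero _ D) => Dd; rewrite Dd in Ej Ek.
  by left; split; [rewrite Ek; ring | rewrite Ej; ring].
by right; split; [rewrite Ek; ring | rewrite Ej -[in RHS]hopp; ring].
Qed.

Arguments phi_inj {e k j k' j'}.

Lemma cover0 (e x : site L) : ~~ odd ((x.1 - e.1)%R + (x.2 - e.2)%R) -> exists k j, x = phi e k j.
Proof.
set a := (x.1 - e.1)%R; set b := (x.2 - e.2)%R => hs.
set s := (a + b)%N.
pose k : Z := ((s./2)%:R)%R.
have hk : (k + k = a + b)%R.
  rewrite /k -natrD addnn.
  have := odd_double_half s; rewrite (negbTE hs) add0n => ->.
  by rewrite /s natrD !natr_Zp.
exists k, (a - k)%R; apply: pairE; rewrite ?phi1 ?phi2.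
  by rewrite /a; ring.
have -> : (e.2 + k - (a - k) = e.2 + (k + k) - a)%R by ring.
by rewrite hk /a /b; ring.
Qed.

Lemma cover (e x : site L) : (exists k j, x = phi e k j) \/ (exists k j, x = psi e k j).
Proof.
case H: (odd ((x.1 - e.1)%R + (x.2 - e.2)%R)).
  right; rewrite /psi; apply: cover0.
  have -> : ((e.1 - 1)%R, e.2).1 = (e.1 - 1)%R by [].
  have -> : ((e.1 - 1)%R, e.2).2 = e.2 by [].
  move: H; rewrite !oddD !odd_add !odd_opp (odd_sub e.1 1%R) val1.
  by case: (odd x.1); case: (odd x.2); case: (odd e.1); case: (odd e.2).
by left; apply: cover0; rewrite H.
Qed.


Definition Bp (l1 l2 : nat) (k j : Z) := (k < l1) && (j < l2).
Definition Ap (l1 l2 : nat) (k j : Z) := (k <= l1) && (j <= l2).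

Ltac ifs := repeat (case: ifP => [/idP ?|/negbT ?]).

Lemma le_succ (b : Z) l : b < l -> l <= L -> (b + 1)%R <= l.
Proof. move=> H1 H2; rewrite vadd val1; ifs; lia. Qed.

Lemma pickA (k : Z) l : 0 < l -> l <= L -> k <= l -> (k < l) \/ ((k - 1)%R < l).
Proof.
move=> H0 H1 H2; case: (ltnP k l) => H3; [by left | right].
rewrite vadd vopp val1 /=; ifs; lia.
Qed.


Lemma memR e l1 l2 x : 0 < l1 <= L -> 0 < l2 <= L ->
  (x \in rhombus l1 l2 e) <->
  ((exists k j, x = phi e k j /\ Bp l1 l2 k j) \/
   (exists k j, x = psi e k j /\ Ap l1 l2 k j)).
Proof.
move=> /andP [H10 H1] /andP [H20 H2]; split.
- rewrite /rhombus in_setU => /orP [/(memS _ _ _ _ H1 H2) [k [j [E hk hj]]]|].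
    by left; exists k, j; split => //; rewrite /Bp hk hj.
  rewrite inE => /andP [_ /existsP [y /andP [/(memS _ _ _ _ H1 H2) [a [b [Ey ha hb]]] axy]]].
  right; subst y; move: axy; rewrite adjE ?phi1 ?phi2.
  case/orP => /andP [/eqP Ex /orP [] /eqP Ex'].
  + exists a, (b + 1)%R; split; last by rewrite /Ap (ltnW ha) (le_succ _ _ hb H2).
    apply: pairE; rewrite ?psi1 ?psi2.
      by rewrite Ex; ring.
    by rewrite -(addrK 1%R x.2) -Ex'; ring.
  + exists (a + 1)%R, b; split; last by rewrite /Ap (ltnW hb) (le_succ _ _ ha H1).
    apply: pairE; rewrite ?psi1 ?psi2 ?Ex ?Ex'; by ring.
  + exists a, b; split; last by rewrite /Ap (ltnW ha) (ltnW hb).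
    apply: pairE; rewrite ?psi1 ?psi2.
      by rewrite -(addrK 1%R x.1) -Ex'; ring.
    by rewrite Ex; ring.
  + exists (a + 1)%R, (b + 1)%R; split; last by rewrite /Ap (le_succ _ _ ha H1) (le_succ _ _ hb H2).
    apply: pairE; rewrite ?psi1 ?psi2 ?Ex ?Ex'; by ring.
- case=> [[k [j [-> /andP [hk hj]]]]|[k [j [-> /andP [hk hj]]]]].
    by rewrite in_setU; apply/orP; left; apply/(memS _ _ _ _ H1 H2); exists k, j.
  rewrite in_setU; apply/orP; right; rewrite inE; apply/andP; split.
    apply/negP => /(memS _ _ _ _ H1 H2) [k' [j' [E _ _]]].
    by have := par_psi e k j; rewrite E par_phi; case: odd_site.
  apply/existsP.
  case: (pickA _ _ H10 H1 hk) => hk'; case: (pickA _ _ H20 H2 hj) => hj'.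
  + exists (phi e k j); apply/andP; split; first by apply/(memS _ _ _ _ H1 H2); exists k, j.
    rewrite adjE; apply/orP; right; apply/andP; split; [|apply/orP; left]; apply/eqP; rewrite ?psi1 ?psi2 ?phi1 ?phi2; ring.
  + exists (phi e k (j - 1)%R); apply/andP; split; first by apply/(memS _ _ _ _ H1 H2); exists k, (j - 1)%R.
    rewrite adjE; apply/orP; left; apply/andP; split; [|apply/orP; left]; apply/eqP; rewrite ?psi1 ?psi2 ?phi1 ?phi2; ring.
  + exists (phi e (k - 1)%R j); apply/andP; split; first by apply/(memS _ _ _ _ H1 H2); exists (k - 1)%R, j.
    rewrite adjE; apply/orP; left; apply/andP; split; [|apply/orP; right]; apply/eqP; rewrite ?psi1 ?psi2 ?phi1 ?phi2; ring.
  + exists (phi e (k - 1)%R (j - 1)%R); apply/andP; split; first by apply/(memS _ _ _ _ H1 H2); exists (k - 1)%R, (j - 1)%R.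
    rewrite adjE; apply/orP; right; apply/andP; split; [|apply/orP; right]; apply/eqP; rewrite ?psi1 ?psi2 ?phi1 ?phi2; ring.
Qed.


Lemma psi_tau e (k j : Z) : psi e (k + hZ)%R (j + hZ)%R = psi e k j.
Proof. exact: phi_tau. Qed.

Lemma psi_inj e (k j k' j' : Z) : psi e k j = psi e k' j' ->
  (k' = k /\ j' = j) \/ (k' = k + hZ /\ j' = j + hZ)%R.
Proof. exact: phi_inj. Qed.

Lemma phi_psi e (k j k' j' : Z) : phi e k j <> psi e k' j'.
Proof. by move=> E; have := par_phi e k j; rewrite E par_psi; case: odd_site. Qed.
Arguments psi_inj {e k j k' j'}.
Arguments phi_psi {e k j k' j'}.

Lemma memR_phi e l1 l2 (k j : Z) : 0 < l1 <= L -> 0 < l2 <= L ->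
  (phi e k j \in rhombus l1 l2 e) = Bp l1 l2 k j || Bp l1 l2 (k + hZ)%R (j + hZ)%R.
Proof.
move=> H1 H2; apply/idP/idP.
- move/(memR _ _ _ _ H1 H2) => [[k' [j' [E hb]]] | [k' [j' [E _]]]].
    by case: (phi_inj E) => [[E1 E2]|[E1 E2]]; rewrite -E1 -E2 hb ?orbT.
  by case: (phi_psi E).
- case/orP => hb; apply/(memR _ _ _ _ H1 H2); left.
    by exists k, j.
  by exists (k + hZ)%R, (j + hZ)%R; rewrite phi_tau.
Qed.

Lemma memR_psi e l1 l2 (k j : Z) : 0 < l1 <= L -> 0 < l2 <= L ->
  (psi e k j \in rhombus l1 l2 e) = Ap l1 l2 k j || Ap l1 l2 (k + hZ)%R (j + hZ)%R.
Proof.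
move=> H1 H2; apply/idP/idP.
- move/(memR _ _ _ _ H1 H2) => [[k' [j' [E _]]] | [k' [j' [E hb]]]].
    by case: (phi_psi (esym E)).
  by case: (psi_inj E) => [[E1 E2]|[E1 E2]]; rewrite -E1 -E2 hb ?orbT.
- case/orP => hb; apply/(memR _ _ _ _ H1 H2); right.
    by exists k, j.
  by exists (k + hZ)%R, (j + hZ)%R; rewrite psi_tau.
Qed.

Definition img (e : site L) (P : pred (Z * Z)) : {set site L} :=
  [set phi e p.1 p.2 | p in [set p | P p]].

Lemma mem_img e P (k j : Z) : (phi e k j \in img e P) = P (k, j) || P (k + hZ, j + hZ)%R.
Proof.
apply/imsetP/idP.
- case=> [[k' j']]; rewrite inE /= => hp E.
  by case: (phi_inj E) => [[E1 E2]|[E1 E2]]; rewrite -E1 -E2 hp ?orbT.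
- case/orP => hp; [exists (k, j) | exists (k + hZ, j + hZ)%R]; rewrite ?inE //=.
  by rewrite phi_tau.
Qed.

Lemma mem_img_cross e e' P (k j : Z) : odd_site e' != odd_site e ->
  (phi e k j \in img e' P) = false.
Proof.
move=> H; apply/imsetP => [[[k' j'] _ E]].
by move: H; rewrite -(par_phi e k j) E par_phi eqxx.
Qed.

Lemma card_img e (P : pred (Z * Z)) :
  (forall k j : Z, P (k, j) -> ~~ P (k + hZ, j + hZ)%R) ->
  #|img e P| = #|[set p | P p]|.
Proof.
move=> HP; apply: card_in_imset => [[k j] [k' j']]; rewrite !inE /= => h1 h2 E.
case: (phi_inj E) => [[-> ->] //|[E1 E2]].
by move: h2; rewrite E1 E2 => h2; have := HP _ _ h1; rewrite h2.
Qed.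

Lemma card_lt a : a <= L -> #|[set k : Z | k < a]| = a.
Proof.
move=> Ha.
have -> : [set k : Z | k < a] = [set widen_ord Ha i | i in 'I_a].
  apply/setP => k; rewrite inE; apply/idP/imsetP.
    by move=> hk; exists (Ordinal hk) => //; apply: ord_inj.
  by case=> i _ ->; exact: (ltn_ord i).
rewrite card_imset; first by rewrite card_ord.
by move=> i i' /(congr1 (@nat_of_ord _)) /= E; apply: ord_inj.
Qed.

Lemma card_ge a : a <= L -> #|[set k : Z | a <= k]| = L - a.
Proof.
move=> Ha.
have -> : [set k : Z | a <= k] = ~: [set k : Z | k < a].
  by apply/setP => k; rewrite !inE -leqNgt.
have := cardsC [set k : Z | k < a]; rewrite card_lt // card_ord; lia.
Qed.

Lemma card_eq c : c < L -> #|[set k : Z | (k : nat) == c]| = 1.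
Proof.
move=> Hc; have -> : [set k : Z | (k : nat) == c] = [set Ordinal Hc].
  by apply/setP => k; rewrite !inE -val_eqE.
by rewrite cards1.
Qed.

Lemma card_prod (P1 P2 : pred Z) :
  #|[set p : Z * Z | P1 p.1 && P2 p.2]| = #|[set k | P1 k]| * #|[set k | P2 k]|.
Proof.
have -> : [set p : Z * Z | P1 p.1 && P2 p.2] = setX [set k | P1 k] [set k | P2 k].
  by apply/setP => [[k j]]; rewrite !inE.
by rewrite cardsX.
Qed.


Ltac arith k j := rewrite /Bp /Ap ?vadd ?vopp ?valh ?val1;
  have := ltn_ord k; have := ltn_ord j; have := L2h; ifs; lia.

Lemma part4 (eta : site L) l1 l2 : 0 < l1 <= L -> 0 < l2 <= L ->
  maxn l1 l2 = L -> L./2 <= minn l1 l2 -> rhombus l1 l2 eta = setT.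
Proof.
move=> H1 H2 Hm Hn; apply/setP => x; rewrite in_setT.
case: (cover eta x) => [[k [j ->]]|[k [j ->]]].
  rewrite memR_phi //; arith k j.
rewrite memR_psi //; arith k j.
Qed.


Lemma vaddP (x y : Z) : exists2 w, nat_of_ord (x + y)%R = w &
  ((x + y < L) && (w == x + y)) || ((L <= x + y) && (w == x + y - L)).
Proof. exists (nat_of_ord (x + y)%R) => //; rewrite vadd; case: ltnP => ? ; lia. Qed.

Lemma voppP (x : Z) : exists2 w, nat_of_ord (- x)%R = w &
  (((x : nat) == 0) && (w == 0)) || ((0 < x) && (w == L - x)).
Proof. exists (nat_of_ord (- x)%R) => //; rewrite vopp; case: eqP => ?; lia. Qed.

Lemma vsubP (x y : Z) : exists2 w, nat_of_ord (x - y)%R = w &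
  ((y <= x) && (w == x - y)) || ((x < y) && (w == x + L - y)).
Proof.
exists (nat_of_ord (x - y)%R) => //; rewrite vadd vopp.
have := ltn_ord x; have := ltn_ord y.
case: (@eqP _ (nat_of_ord y) 0) => E; ifs; lia.
Qed.

Ltac norm := repeat match goal with
 | |- context [nat_of_ord (?x - ?y)%R] => let w := fresh "w" in case: (vsubP x y) => w ->
 | |- context [nat_of_ord (?x + ?y)%R] => let w := fresh "w" in case: (vaddP x y) => w ->
 | |- context [nat_of_ord (- ?x)%R] => let w := fresh "w" in case: (voppP x) => w ->
 end.

Definition imgpsi (e : site L) P := img (e.1 - 1, e.2)%R P.

Lemma mem_imgpsi e P (k j : Z) : (psi e k j \in imgpsi e P) = P (k, j) || P (k + hZ, j + hZ)%R.
Proof. exact: mem_img. Qed.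

Lemma mem_img_psi e P (k j : Z) : (psi e k j \in img e P) = false.
Proof.
apply: mem_img_cross; have := par_psi e k j; rewrite /psi par_phi => ->.
by case: odd_site.
Qed.

Lemma mem_imgpsi_phi e P (k j : Z) : (phi e k j \in imgpsi e P) = false.
Proof.
apply: mem_img_cross; have := par_psi e k j; rewrite /psi par_phi => ->.
by case: odd_site.
Qed.

Lemma card_Bp l1 l2 : l1 <= L -> l2 <= L -> #|[set p : Z * Z | Bp l1 l2 p.1 p.2]| = l1 * l2.
Proof.
move=> H1 H2; rewrite /Bp (card_prod (fun k : Z => k < l1) (fun k : Z => k < l2)).
by rewrite !card_lt.
Qed.

Lemma card_le l : #|[set k : Z | k <= l]| = minn l.+1 L.
Proof.
rewrite -(card_lt (minn l.+1 L)); last by rewrite geq_minr.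
apply: eq_card => k; rewrite !inE; have := ltn_ord k; lia.
Qed.

Lemma card_Ap l1 l2 : #|[set p : Z * Z | Ap l1 l2 p.1 p.2]| = minn l1.+1 L * minn l2.+1 L.
Proof.
rewrite /Ap (card_prod (fun k : Z => k <= l1) (fun k : Z => k <= l2)).
by rewrite !card_le.
Qed.

Ltac arith2 k j := rewrite /Bp /Ap; norm; rewrite ?valh ?val1;
  have := ltn_ord k; have := ltn_ord j; have := L2h; move=> *; lia.

Lemma part3 (eta : site L) l1 l2 : odd_site eta -> 0 < l1 <= L -> 0 < l2 <= L ->
  maxn l1 l2 = L -> minn l1 l2 < L./2 ->
  #|[set x in rhombus l1 l2 eta | odd_site x]| = L * minn l1 l2 /\
  #|[set x in rhombus l1 l2 eta | even_site x]| = L * (minn l1 l2).+1.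
Proof.
move=> he H1 H2 Hm Hn; split.
  have -> : [set x in rhombus l1 l2 eta | odd_site x] = img eta (fun p => Bp l1 l2 p.1 p.2).
    apply/setP => x; rewrite inE.
    case: (cover eta x) => [[k [j ->]]|[k [j ->]]].
      by rewrite memR_phi // mem_img par_phi he andbT.
    by rewrite mem_img_psi par_psi he andbF.
  rewrite card_img; last by move=> k j /=; arith2 k j.
  rewrite card_Bp; [|lia|lia].
  case/orP: (leq_total l1 l2) => E.
    have -> : l2 = L by lia.
    have -> : minn l1 L = l1 by lia.
    by rewrite mulnC.
  have -> : l1 = L by lia.
  have -> : minn L l2 = l2 by lia.
  by [].
have -> : [set x in rhombus l1 l2 eta | even_site x] = imgpsi eta (fun p => Ap l1 l2 p.1 p.2).
  apply/setP => x; rewrite inE /even_site.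
  case: (cover eta x) => [[k [j ->]]|[k [j ->]]].
    by rewrite mem_imgpsi_phi -/(odd_site _) par_phi he andbF.
  by rewrite memR_psi // mem_imgpsi -/(odd_site _) par_psi he andbT.
rewrite card_img; last by move=> k j /=; arith2 k j.
rewrite card_Ap.
case/orP: (leq_total l1 l2) => E.
  have -> : l2 = L by lia.
  have -> : minn l1 L = l1 by lia.
  have -> : minn L.+1 L = L by lia.
  have -> : minn l1.+1 L = l1.+1 by lia.
  by rewrite mulnC.
have -> : l1 = L by lia.
have -> : minn L l2 = l2 by lia.
have -> : minn L.+1 L = L by lia.
have -> : minn l2.+1 L = l2.+1 by lia.
by [].
Qed.


Definition Q1 l (k j : Z) := ((k : nat) == h.-1) && (l <= j).
Definition Q2 l (k j : Z) := (l <= k) && ((j : nat) == h.-1).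

Lemma part2_gen (eta : site L) l1 l2 (Q : Z -> Z -> bool) :
  odd_site eta -> 0 < l1 <= L -> 0 < l2 <= L ->
  (forall k j : Z, Q k j -> ~~ Q (k + hZ)%R (j + hZ)%R) ->
  (forall k j : Z, Ap l1 l2 k j || Ap l1 l2 (k + hZ)%R (j + hZ)%R) ->
  (forall k j : Z, ~~ (Bp l1 l2 k j || Bp l1 l2 (k + hZ)%R (j + hZ)%R) = Q k j || Q (k + hZ)%R (j + hZ)%R) ->
  {subset ~: rhombus l1 l2 eta <= [pred x | odd_site x]} /\
  #|~: rhombus l1 l2 eta| = #|[set p : Z * Z | Q p.1 p.2]|.
Proof.
move=> he H1 H2 HQ HA HB.
have E : ~: rhombus l1 l2 eta = img eta (fun p => Q p.1 p.2).
  apply/setP => x; rewrite in_setC.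
  case: (cover eta x) => [[k [j ->]]|[k [j ->]]].
    by rewrite memR_phi // mem_img HB.
  by rewrite memR_psi // mem_img_psi HA.
split.
  move=> x; rewrite E inE.
  case: (cover eta x) => [[k [j ->]]|[k [j ->]]].
    by rewrite par_phi.
  by rewrite mem_img_psi.
by rewrite E card_img // => k j /=; apply: HQ.
Qed.

Lemma part2 (eta : site L) l1 l2 : odd_site eta -> 0 < l1 <= L -> 0 < l2 <= L ->
  maxn l1 l2 = L - 1 -> L./2 <= minn l1 l2 ->
  {subset ~: rhombus l1 l2 eta <= [pred x | odd_site x]} /\
  #|~: rhombus l1 l2 eta| = L - minn l1 l2.
Proof.
move=> he H1 H2 Hm Hn.
case: (eqVneq l1 L.-1) => E1.
  case: (part2_gen _ _ _ (Q1 l2) he H1 H2) => [k j|k j|k j|HS HC].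
  - by rewrite /Q1; arith2 k j.
  - by arith2 k j.
  - by rewrite /Q1; arith2 k j.
  split => //; rewrite HC.
  rewrite /Q1 (card_prod (fun k : Z => (k : nat) == h.-1) (fun k : Z => l2 <= k)).
  rewrite card_eq ?card_ge; [|lia|]; last by have := L2h; lia.
  have -> : minn l1 l2 = l2 by lia.
  by rewrite mul1n.
case: (part2_gen _ _ _ (Q2 l1) he H1 H2) => [k j|k j|k j|HS HC].
- by rewrite /Q2; arith2 k j.
- by arith2 k j.
- by rewrite /Q2; arith2 k j.
split => //; rewrite HC.
rewrite /Q2 (card_prod (fun k : Z => l1 <= k) (fun k : Z => (k : nat) == h.-1)).
rewrite card_eq ?card_ge; [|lia|]; last by have := L2h; lia.
have -> : minn l1 l2 = l1 by lia.
by rewrite muln1.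
Qed.


Lemma pair1 (x y : Z) : (x, y).1 = x. Proof. by []. Qed.
Lemma pair2 (x y : Z) : (x, y).2 = y. Proof. by []. Qed.

Lemma boolfact (K0 K1 J0 J1 : bool) : K0 || K1 -> J0 || J1 ->
  ~~ ((K0 && J0) || (K1 && J1)) = (~~ K1 && ~~ J0) || (~~ K0 && ~~ J1).
Proof. by case: K0; case: K1; case: J0; case: J1. Qed.

Ltac ar k va vb := norm; rewrite ?valh ?val1 ?va ?vb;
  have := ltn_ord k; move=> *; lia.

Lemma part1 (eta : site L) l1 l2 : odd_site eta -> 0 < l1 <= L -> 0 < l2 <= L ->
  maxn l1 l2 <= L - 2 -> L./2 <= minn l1 l2 ->
  exists2 etah : site L, even_site etah &
    ~: rhombus l1 l2 eta = rhombus (L - l1 - 1) (L - l2 - 1) etah.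
Proof.
move=> he H1 H2 Hm Hn.
have HL := L2h.
pose a : Z := ((l1 - h).+1)%:R%R.
pose b : Z := (l2.+1)%:R%R.
have va : nat_of_ord a = (l1 - h).+1 by apply: valn; lia.
have vb : nat_of_ord b = l2.+1 by apply: valn; lia.
have Hp : 0 < L - l1 - 1 <= L by lia.
have Hq : 0 < L - l2 - 1 <= L by lia.
exists (psi eta a b); first by rewrite /even_site -/(odd_site _) par_psi he.
apply/setP => x; rewrite in_setC.
case: (cover eta x) => [[k [j ->]]|[k [j ->]]].
  rewrite memR_phi //.
  have -> : phi eta k j = psi (psi eta a b) (k - a + 1)%R (j - b + 1)%R.
    by apply: pairE; rewrite ?psi1 ?psi2 ?phi1 ?phi2; ring.
  rewrite memR_psi // /Bp /Ap.
  have -> : (nat_of_ord (k - a + 1)%R <= L - l1 - 1) = ~~ (nat_of_ord (k + hZ)%R < l1) by ar k va vb.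
  have -> : (nat_of_ord (k - a + 1 + hZ)%R <= L - l1 - 1) = ~~ (nat_of_ord k < l1) by ar k va vb.
  have -> : (nat_of_ord (j - b + 1)%R <= L - l2 - 1) = ~~ (nat_of_ord j < l2) by ar j va vb.
  have -> : (nat_of_ord (j - b + 1 + hZ)%R <= L - l2 - 1) = ~~ (nat_of_ord (j + hZ)%R < l2) by ar j va vb.
  apply: boolfact; [ar k va vb | ar j va vb].
rewrite memR_psi //.
have -> : psi eta k j = phi (psi eta a b) (k - a)%R (j - b)%R.
  by apply: pairE; rewrite ?psi1 ?psi2 ?phi1 ?phi2 ?pair1 ?pair2; ring.
rewrite memR_phi // /Bp /Ap.
have -> : (nat_of_ord (k - a)%R < L - l1 - 1) = ~~ (nat_of_ord (k + hZ)%R <= l1) by ar k va vb.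
have -> : (nat_of_ord (k - a + hZ)%R < L - l1 - 1) = ~~ (nat_of_ord k <= l1) by ar k va vb.
have -> : (nat_of_ord (j - b)%R < L - l2 - 1) = ~~ (nat_of_ord j <= l2) by ar j va vb.
have -> : (nat_of_ord (j - b + hZ)%R < L - l2 - 1) = ~~ (nat_of_ord (j + hZ)%R <= l2) by ar j va vb.
apply: boolfact; [ar k va vb | ar j va vb].
Qed.

End Torus.

Theorem lemma3p2 (L : nat) (hL : 6 <= L) (hLe : ~~ odd L)
  (eta : site L) (heta : odd_site eta) (l1 l2 : nat)
  (hl1 : 0 < l1 <= L) (hl2 : 0 < l2 <= L) :
  [/\ (maxn l1 l2 <= L - 2 -> L./2 <= minn l1 l2 ->
        exists2 etah : site L, even_site etah &
          ~: rhombus l1 l2 eta = rhombus (L - l1 - 1) (L - l2 - 1) etah),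
      (maxn l1 l2 = L - 1 -> L./2 <= minn l1 l2 ->
        {subset ~: rhombus l1 l2 eta <= [pred x | odd_site x]} /\
        #|~: rhombus l1 l2 eta| = L - minn l1 l2),
      (maxn l1 l2 = L -> minn l1 l2 < L./2 ->
        #|[set x in rhombus l1 l2 eta | odd_site x]| = L * minn l1 l2 /\
        #|[set x in rhombus l1 l2 eta | even_site x]| = L * (minn l1 l2).+1)
    & (maxn l1 l2 = L -> L./2 <= minn l1 l2 -> rhombus l1 l2 eta = setT)].
Proof.
have [n En] : exists n, L = n.+2 by exists L.-2; lia.
subst L.
have hev : ~~ odd n by move: hLe; rewrite /= negbK.
split.
- exact: part1 hev eta l1 l2 heta hl1 hl2.
- exact: part2 hev eta l1 l2 heta hl1 hl2.
- exact: part3 hev eta l1 l2 heta hl1 hl2.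
- exact: part4 hev eta l1 l2 hl1 hl2.
Qed.
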